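(* Let $S$ be a nonempty complete lattice and let $F:S\to 2^S$ be a V-ascending correspondence. Suppose that for every $x\in S$, the subset $F(x)$ is nonempty and chain-subcomplete in $S$. Then $\mathrm{Fix}(F)=\{s\in S: s\in F(s)\}$, with the order induced from $S$, is a nonempty complete lattice.
   Context: A poset $S$ is a complete lattice if every nonempty subset $A\subset S$ has a supremum $\sup_S A$ and an infimum $\inf_S A$ in $S$. A subset $T$ of a poset $S$ is chain-subcomplete upwards (resp. downwards) in $S$ if for every nonempty chain $C\subset T$, $\sup_S C$ (resp. $\inf_S C$) exists and belongs to $T$; it is chain-subcomplete in $S$ if it is both. For a lattice $S$ and a correspondence $F:S\to 2^S$: $F$ is lower V-ascending if for all $x<x'$ in $S$ (strict inequality), every $y\in F(x)$ and every $y'\in F(x')$, one has $y\wedge y'\in F(x)$; $F$ is upper V-ascending if under the same conditions $y\vee y'\in F(x')$; $F$ is V-ascending if it is both upper and lower V-ascending. *)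

(* Defs.v *)
From mathcomp Require Import all_boot all_order.
Set Implicit Arguments. Unset Strict Implicit. Unset Printing Implicit Defensive.
Import Order.TTheory.
Local Open Scope order_scope.

Section Defs.
Context {d : Order.disp_t} {T : porderType d}.

Definition is_sup_in (X A : T -> Prop) (s : T) : Prop :=
  X s /\ (forall a, A a -> a <= s) /\
  (forall u, X u -> (forall a, A a -> a <= u) -> s <= u).

Definition is_inf_in (X A : T -> Prop) (s : T) : Prop :=
  X s /\ (forall a, A a -> s <= a) /\
  (forall u, X u -> (forall a, A a -> u <= a) -> u <= s).

Definition subset (A B : T -> Prop) : Prop := forall x, A x -> B x.
Definition nonempty (A : T -> Prop) : Prop := exists x, A x.
Definition is_chain (C : T -> Prop) : Prop :=
  forall x y, C x -> C y -> x <= y \/ y <= x.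

Definition complete_sublattice (X : T -> Prop) : Prop :=
  forall A, subset A X -> nonempty A ->
    (exists s, is_sup_in X A s) /\ (exists s, is_inf_in X A s).

Definition complete_lattice : Prop := complete_sublattice (fun _ => True).

Definition chain_subcomplete_up (X : T -> Prop) : Prop :=
  forall C, subset C X -> nonempty C -> is_chain C ->
    exists s, is_sup_in (fun _ => True) C s /\ X s.
Definition chain_subcomplete_down (X : T -> Prop) : Prop :=
  forall C, subset C X -> nonempty C -> is_chain C ->
    exists s, is_inf_in (fun _ => True) C s /\ X s.
Definition chain_subcomplete (X : T -> Prop) : Prop :=
  chain_subcomplete_up X /\ chain_subcomplete_down X.

End Defs.

Section Corr.
Context {d : Order.disp_t} {T : latticeType d}.

Definition lower_V_ascending (F : T -> T -> Prop) : Prop :=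
  forall x x', x < x' -> forall y y', F x y -> F x' y' -> F x (y `&` y').
Definition upper_V_ascending (F : T -> T -> Prop) : Prop :=
  forall x x', x < x' -> forall y y', F x y -> F x' y' -> F x' (y `|` y').
Definition V_ascending (F : T -> T -> Prop) : Prop :=
  upper_V_ascending F /\ lower_V_ascending F.

Definition Fix (F : T -> T -> Prop) : T -> Prop := fun s => F s s.

End Corr.

(* Main.v *)
Require Import Defs.
From mathcomp Require Import all_boot all_order.
From mathcomp Require boolp classical_sets.
From Stdlib Require Import Classical.
Import Order.TTheory.
Local Open Scope order_scope.

Lemma zornP (T : Type) (R : T -> T -> Prop) :
  (forall t, R t t) -> (forall r s t, R r s -> R s t -> R r t) ->
  (forall s t, R s t -> R t s -> s = t) ->
  (forall A : T -> Prop, (forall s t, A s -> A t -> R s t \/ R t s) ->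
     exists t, forall s, A s -> R s t) ->
  exists t, forall s, R t s -> s = t.
Proof.
move=> Rr Rt Ra Rc.
have [t Ht] : exists t, forall s, boolp.asbool (R t s) -> s = t.
  apply: (@classical_sets.Zorn T (fun x y => boolp.asbool (R x y))).
- by move=> t; apply/boolp.asboolP.
- by move=> r s t /boolp.asboolP H1 /boolp.asboolP H2; apply/boolp.asboolP; eauto.
- by move=> s t /boolp.asboolP H1 /boolp.asboolP H2; eauto.
- move=> A HA; have [|t Ht] := Rc A.
    move=> s t As At; case: (HA s t As At) => /boolp.asboolP; tauto.
  by exists t => s As; apply/boolp.asboolP; auto.
by exists t => s Hs; apply: Ht; apply/boolp.asboolP.
Qed.

Lemma max_in (T : Type) (X : T -> Prop) (R : T -> T -> Prop) :
  (forall t, R t t) -> (forall r s t, R r s -> R s t -> R r t) ->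
  (forall s t, R s t -> R t s -> s = t) ->
  (forall C : T -> Prop, (forall x, C x -> X x) ->
     (forall s t, C s -> C t -> R s t \/ R t s) ->
     exists u, X u /\ forall c, C c -> R c u) ->
  exists t, X t /\ forall s, X s -> R t s -> s = t.
Proof.
move=> Rr Rt Ra Rc.
have [t Ht] : exists t : {x : T | X x}, forall s, R (proj1_sig t) (proj1_sig s) -> s = t.
  apply: (@zornP {x : T | X x} (fun a b => R (proj1_sig a) (proj1_sig b))).
- by move=> t; apply: Rr.
- by move=> r s t; apply: Rt.
- move=> [s Xs] [t Xt] /= H1 H2; have E := Ra _ _ H1 H2; subst t.
  by rewrite (proof_irrelevance _ Xs Xt).
- move=> A HA.
  have [u [Xu Hu]] : exists u, X u /\ forall c, (exists p : X c, A (exist _ c p)) -> R c u.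
    apply: (Rc (fun x => exists p : X x, A (exist _ x p))).
    by move=> x [p _].
    by move=> s t [p Ap] [q Aq]; apply: (HA _ _ Ap Aq).
  exists (exist _ u Xu) => [[s p]] As /=; apply: Hu; by exists p.
case: t Ht => t Xt Ht; exists t; split=> // s Xs Rts.
by have := Ht (exist _ s Xs) Rts => /(f_equal (@proj1_sig _ _)).
Qed.

Lemma sup_fix (d : Order.disp_t) (T : latticeType d) (F : T -> T -> Prop) :
  inhabited T -> complete_lattice (T := T) -> upper_V_ascending F ->
  lower_V_ascending F ->
  (forall x, nonempty (F x) /\ chain_subcomplete (F x)) ->
  forall A, Defs.subset A (Fix F) -> exists m, is_sup_in (Fix F) A m.
Proof.
move=> [t0] CL UV LV HF A HA.
have [a [Aa Aa']] : exists a, (forall s, A s -> s <= a) /\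
    (forall u, (forall s, A s -> s <= u) -> a <= u).
  case: (classic (nonempty A)) => [nA|nA].
  - have [[a [_ [H1 H2]]] _] := CL A (fun _ _ => I) nA.
    by exists a; split=> // u Hu; exact: H2.
  - have [_ [b [_ [H1 H2]]]] := CL (fun _ => True) (fun _ _ => I) (ex_intro _ t0 I).
    exists b; split.
    + by move=> s As; exfalso; apply nA; exists s.
    + by move=> u _; exact: H1.
have [top [_ [Htop _]]] := (CL (fun _ => True) (fun _ _ => I) (ex_intro _ t0 I)).1.
pose D := fun x => a <= x /\ exists y, F x y /\ y <= x.
have Dtop : D top.
  split; first exact: Htop.
  have [y Fy] := (HF top).1; exists y; split=> //; exact: Htop.
have [m [_ [Dm1 Dm2]]] := (CL D (fun _ _ => I) (ex_intro _ top Dtop)).2.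
have am : a <= m := Dm2 a I (fun x Dx => Dx.1).
have [z0 [Fz0 z0min]] : exists z, F m z /\ forall w, F m w -> w <= z -> w = z.
  have [z [Fz Hz]] : exists t, F m t /\ forall s, F m s -> s <= t -> s = t.
    apply: (@max_in T (F m) (fun x y => y <= x) (@lexx _ _)
    (fun r s t H1 H2 => le_trans H2 H1) (fun s t H1 H2 => le_anti (introT andP (conj H2 H1)))).
  - move=> C CX Cch; case: (classic (nonempty C)) => [nC|nC].
    + have [s [[_ [Hs1 _]] Fs]] := (HF m).2.2 C CX nC (fun x y Cx Cy => proj1 (or_comm _ _) (Cch x y Cx Cy)).
      by exists s; split.
    + have [z Fz] := (HF m).1; exists z; split=> // c Cc; exfalso; apply: nC; by exists c.
  by exists z; split=> // w Fw wz; apply: Hz.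
have mD : D m.
  case: (classic (D m)) => // nDm; split=> //; exists z0; split=> //.
  apply: Dm2 => // x Dx.
  have mx : m < x.
    rewrite lt_neqAle Dm1 // andbT; apply/eqP => E; apply: nDm; by rewrite E.
  case: Dx => _ [y [Fy yx]].
  have Fmeet := LV _ _ mx _ _ Fz0 Fy.
  have E := z0min _ Fmeet (leIl z0 y).
  apply: le_trans yx; rewrite -E; exact: leIr.
have [y [[Fy ym] ymax]] : exists y, (F m y /\ y <= m) /\
    forall w, (F m w /\ w <= m) -> y <= w -> w = y.
  apply: (@max_in T (fun y => F m y /\ y <= m) (fun x y => x <= y) (@lexx _ _)
    (fun r s t H1 H2 => le_trans H1 H2) (fun s t H1 H2 => le_anti (introT andP (conj H1 H2)))).
  move=> C CX Cch; case: (classic (nonempty C)) => [nC|nC].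
  - have [s [[_ [Hs1 Hs2]] Fs]] := (HF m).2.1 C (fun x Cx => (CX x Cx).1) nC Cch.
    exists s; split=> //; split=> //; apply: Hs2 => // c Cc; exact: (CX c Cc).2.
  - case: mD => _ [z [Fz zm]]; exists z; split=> // c Cc; exfalso; apply: nC; by exists c.
case: (classic (exists s, A s /\ s = m)) => [[s [As Esm]]|noAm].
  subst s; exists m; split; first exact: HA.
  split; first by move=> b Ab; apply: le_trans (Aa b Ab) am.
  by move=> u _ Hu; apply: Hu.
have ay : a <= y.
  apply: Aa' => s As.
  have sm : s < m.
    rewrite lt_neqAle (le_trans (Aa s As) am) andbT; apply/eqP => E; apply: noAm; by exists s.
  have Fj := UV _ _ sm _ _ (HA s As) Fy.
  have E : s `|` y = y.
    apply: ymax; last exact: leUr.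
    split=> //; rewrite leUx (ltW sm) ym //.
  rewrite -E; exact: leUl.
have Eym : y = m.
  case: (classic (y = m)) => // yneq.
  have ylt : y < m by rewrite lt_neqAle ym andbT; apply/eqP.
  have [w Fw] := (HF y).1.
  have Dy : D y := conj ay (ex_intro _ (w `&` y) (conj (LV _ _ ylt _ _ Fw Fy) (leIr y w))).
  have my := Dm1 _ Dy; apply: le_anti; rewrite ym my //.
subst y; exists m; split; first exact: Fy.
split; first by move=> b Ab; apply: le_trans (Aa b Ab) am.
move=> u Fu Hu; apply: Dm1; split; first exact: Aa' Hu.
by exists u; split.
Qed.

Theorem theorem1p2 (d : Order.disp_t) (S : latticeType d) (F : S -> S -> Prop) :
  inhabited S ->
  complete_lattice (T := S) ->
  V_ascending F ->
  (forall x : S, nonempty (F x) /\ chain_subcomplete (F x)) ->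
  nonempty (Fix F) /\ complete_sublattice (Fix F).
Proof.
move=> inh CL [UV LV] HF.
have supF := @sup_fix _ S F inh CL UV LV HF.
have infF : forall A, Defs.subset A (Fix F) -> exists m, is_inf_in (Fix F) A m.
  move=> A HA.
  suff [m Hm] : exists m : S^d, is_sup_in (T:=S^d) (Fix (T:=S^d) F) A m by exists m; exact: Hm.
  apply: (@sup_fix _ (S^d) F inh _ _ _ _ A HA).
  - move=> B HB nB; have [[s Hs] [i Hi]] := CL B HB nB; split; [exists i | exists s]; exact.
  - move=> x x' lt y y' Fy Fy'; have := LV x' x lt y' y Fy' Fy; rewrite meetC; exact.
  - move=> x x' lt y y' Fy Fy'; have := UV x' x lt y' y Fy' Fy; rewrite joinC; exact.
  - move=> x; have [ne [up dn]] := HF x; split=> //; split.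
    + move=> C CX nC Cch; have [s [Hs Fs]] := dn C CX nC (fun a b Ca Cb => proj1 (or_comm _ _) (Cch a b Ca Cb)).
      by exists s; split.
    + move=> C CX nC Cch; have [s [Hs Fs]] := up C CX nC (fun a b Ca Cb => proj1 (or_comm _ _) (Cch a b Ca Cb)).
      by exists s; split.
split.
  have [m [Fm _]] := supF (fun _ => False) (fun _ f => False_ind _ f).
  by exists m.
move=> A HA nA; split; [exact: supF | exact: infF].
Qed.
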